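(* The unique typical subrank of real $3\times3\times3$ tensors is $2$, and the unique typical subrank of real $3\times3\times4$ tensors is $2$.
   Context: For $r \geq 0$ let $I_r := \sum_{j=1}^r e_j \otimes e_j \otimes e_j$. The subrank of $T \in \mathbb{R}^{n_1} \otimes \mathbb{R}^{n_2} \otimes \mathbb{R}^{n_3}$ is $Q(T) := \max\{ r \mid \exists\ \mathbb{R}\text{-linear } \varphi_i : \mathbb{R}^{n_i} \to \mathbb{R}^r,\ (\varphi_1 \otimes \varphi_2 \otimes \varphi_3) T = I_r\}$. An integer $r$ is a typical subrank of the format $n_1\times n_2\times n_3$ if $\{T \mid Q(T) = r\}$ contains a nonempty Euclidean-open subset of $\mathbb{R}^{n_1} \otimes \mathbb{R}^{n_2} \otimes \mathbb{R}^{n_3}$. *)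

(* Defs.v *)
From HB Require Import structures.
From mathcomp Require Import all_boot all_order all_algebra.
From mathcomp Require Import reals.
Set Implicit Arguments. Unset Strict Implicit. Unset Printing Implicit Defensive.
Import Order.TTheory GRing.Theory Num.Theory.
Local Open Scope ring_scope.

(* A tensor in R^n1 (x) R^n2 (x) R^n3, given by its coordinates in the
   standard basis: T i j k is the coefficient of e_i (x) e_j (x) e_k. *)
Definition tensor (R : Type) (n1 n2 n3 : nat) := 'I_n1 -> 'I_n2 -> 'I_n3 -> R.

Definition unit_tensor (R : nzRingType) (r : nat) : tensor R r r r :=
  fun a b c => if (a == b) && (b == c) then 1 else 0.

(* (phi1 (x) phi2 (x) phi3) T, where the linear maps phi_i : R^{n_i} -> R^r
   are given by their r x n_i matrices. *)
Definition tensor_map (R : nzRingType) (n1 n2 n3 m1 m2 m3 : nat)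
  (A1 : 'M[R]_(m1, n1)) (A2 : 'M[R]_(m2, n2)) (A3 : 'M[R]_(m3, n3))
  (T : tensor R n1 n2 n3) : tensor R m1 m2 m3 :=
  fun a b c => \sum_(i < n1) \sum_(j < n2) \sum_(k < n3)
                 A1 a i * A2 b j * A3 c k * T i j k.

Definition restricts_to_unit (R : nzRingType) (n1 n2 n3 : nat)
  (T : tensor R n1 n2 n3) (r : nat) : Prop :=
  exists (A1 : 'M[R]_(r, n1)) (A2 : 'M[R]_(r, n2)) (A3 : 'M[R]_(r, n3)),
    tensor_map A1 A2 A3 T = @unit_tensor R r.

Definition is_subrank (R : nzRingType) (n1 n2 n3 : nat)
  (T : tensor R n1 n2 n3) (r : nat) : Prop :=
  restricts_to_unit T r /\ (forall s, restricts_to_unit T s -> (s <= r)%N).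

(* Euclidean-open subsets of R^n1 (x) R^n2 (x) R^n3 (topology of the
   coordinatewise max-norm, which is the Euclidean topology). *)
Definition euclid_open (R : realType) (n1 n2 n3 : nat)
  (U : tensor R n1 n2 n3 -> Prop) : Prop :=
  forall T, U T -> exists2 eps : R, 0 < eps &
    forall T' : tensor R n1 n2 n3,
      (forall i j k, `|T' i j k - T i j k| < eps) -> U T'.

Definition typical_subrank (R : realType) (n1 n2 n3 r : nat) : Prop :=
  exists U : tensor R n1 n2 n3 -> Prop,
    euclid_open U /\ (exists T, U T) /\
    (forall T, U T -> is_subrank T r).

(* Main.v *)
Require Import Defs.
From HB Require Import structures.
From mathcomp Require Import all_boot all_order all_algebra.
From mathcomp Require Import reals.
From mathcomp Require Import ring lra.
From Stdlib Require Import FunctionalExtensionality.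
Set Implicit Arguments. Unset Strict Implicit. Unset Printing Implicit Defensive.
Import Order.TTheory GRing.Theory Num.Theory.
Section Good.
Local Open Scope ring_scope.
Variable R : realType.
Variables n1 n2 n3 : nat.
Notation tens := (tensor R n1 n2 n3).

Definition linet (T D : tens) (t : R) : tens := fun i j k => T i j k + t * D i j k.

Definition polyf (f : tens -> R) := forall T D : tens, exists P : {poly R},
  forall t, f (linet T D t) = P.[t].

Definition contf (f : tens -> R) := forall (T : tens) (e : R), 0 < e ->
  exists2 d : R, 0 < d & forall T' : tens,
    (forall i j k, `|T' i j k - T i j k| < d) -> `|f T' - f T| < e.

Definition good f := polyf f /\ contf f.

Lemma good_ext f g : good f -> (forall T, f T = g T) -> good g.
Proof.
move=> [pf cf] e; split.
  move=> T D; have [P HP] := pf T D; exists P => t; by rewrite -e HP.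
move=> T eps he; have [d hd H] := cf T eps he; exists d => // T' hT'.
by rewrite -!e; apply: H.
Qed.

Lemma good_const c : good (fun _ => c).
Proof.
split; first by move=> T D; exists c%:P => t; rewrite hornerC.
by move=> T e he; exists 1 => // T' _; rewrite subrr normr0.
Qed.

Lemma good_coord i j k : good (fun T => T i j k).
Proof.
split.
  move=> T D; exists ((T i j k)%:P + (D i j k)%:P * 'X) => t.
  by rewrite /linet hornerD hornerC hornerMX hornerC mulrC.
by move=> T e he; exists e => // T' H; apply: H.
Qed.

Lemma good_add f g : good f -> good g -> good (fun T => f T + g T).
Proof.
move=> [pf cf] [pg cg]; split.
  move=> T D; have [P HP] := pf T D; have [Q HQ] := pg T D.
  by exists (P + Q) => t; rewrite hornerD HP HQ.
move=> T e he.
have he2 : 0 < e / 2 by rewrite divr_gt0.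
have [d1 hd1 H1] := cf T _ he2; have [d2 hd2 H2] := cg T _ he2.
exists (Num.min d1 d2); first by rewrite lt_min hd1 hd2.
move=> T' H.
have h1 : `|f T' - f T| < e / 2 by apply: H1 => i j k; have := H i j k; rewrite lt_min => /andP[].
have h2 : `|g T' - g T| < e / 2 by apply: H2 => i j k; have := H i j k; rewrite lt_min => /andP[].
have -> : f T' + g T' - (f T + g T) = (f T' - f T) + (g T' - g T) by ring.
apply: (le_lt_trans (ler_normD _ _)).
have -> : e = e / 2 + e / 2 by field.
by apply: ltrD.
Qed.

Lemma good_opp f : good f -> good (fun T => - f T).
Proof.
move=> [pf cf]; split.
  move=> T D; have [P HP] := pf T D.
  by exists (- P) => t; rewrite hornerN HP.
move=> T e he; have [d hd H] := cf T e he; exists d => // T' H'.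
by rewrite -opprD normrN; apply: H.
Qed.

Lemma good_mul f g : good f -> good g -> good (fun T => f T * g T).
Proof.
move=> [pf cf] [pg cg]; split.
  move=> T D; have [P HP] := pf T D; have [Q HQ] := pg T D.
  by exists (P * Q) => t; rewrite hornerM HP HQ.
move=> T e he.
set K := `|f T| + `|g T| + 1.
have hK : 0 < K by rewrite /K ltr_pwDr // addr_ge0.
set e1 := Num.min 1 (e / (2 * K)).
have he1 : 0 < e1 by rewrite lt_min ltr01 divr_gt0 // mulr_gt0.
have [d1 hd1 H1] := cf T _ he1; have [d2 hd2 H2] := cg T _ he1.
exists (Num.min d1 d2); first by rewrite lt_min hd1 hd2.
move=> T' H.
have h1 : `|f T' - f T| < e1 by apply: H1 => i j k; have := H i j k; rewrite lt_min => /andP[].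
have h2 : `|g T' - g T| < e1 by apply: H2 => i j k; have := H i j k; rewrite lt_min => /andP[].
have e1le1 : e1 <= 1 by rewrite ge_min lexx.
have e1le : e1 * K <= e / 2.
  have h : e1 <= e / (2 * K) by rewrite /e1 ge_min lexx orbT.
  have hKn : K != 0 by rewrite gt_eqF.
  have -> : e / 2 = e / (2 * K) * K by field.
  by rewrite ler_pM2r.
have hg : `|g T'| <= `|g T| + 1.
  have -> : g T' = g T + (g T' - g T) by ring.
  apply: (le_trans (ler_normD _ _)); rewrite lerD2l.
  by apply: (le_trans (ltW h2)).
have -> : f T' * g T' - f T * g T = (f T' - f T) * g T' + f T * (g T' - g T) by ring.
apply: (le_lt_trans (ler_normD _ _)); rewrite !normrM.
apply: (le_lt_trans (y := e1 * (`|g T| + 1) + `|f T| * e1)).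
  apply: lerD.
    by apply: ler_pM => //; apply: ltW.
  by apply: ler_pM => //; apply: ltW.
apply: (le_lt_trans (y := e / 2)).
  apply: le_trans e1le; rewrite /K; lra.
by rewrite ltr_pdivrMr // ltr_pMr // ltr1n.
Qed.

Lemma good_big (I : Type) (r : seq I) (P : pred I) (F : I -> tens -> R) :
  (forall i, P i -> good (F i)) -> good (fun T => \sum_(i <- r | P i) F i T).
Proof.
move=> HF; elim: r => [|x r IH].
  by apply: (good_ext (good_const 0)) => T; rewrite big_nil.
case hx: (P x).
  apply: (good_ext (good_add (HF x hx) IH)) => T; by rewrite big_cons hx.
by apply: (good_ext IH) => T; rewrite big_cons hx.
Qed.

Lemma good_bigprod (I : Type) (r : seq I) (P : pred I) (F : I -> tens -> R) :
  (forall i, P i -> good (F i)) -> good (fun T => \prod_(i <- r | P i) F i T).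
Proof.
move=> HF; elim: r => [|x r IH].
  by apply: (good_ext (good_const 1)) => T; rewrite big_nil.
case hx: (P x).
  apply: (good_ext (good_mul (HF x hx) IH)) => T; by rewrite big_cons hx.
by apply: (good_ext IH) => T; rewrite big_cons hx.
Qed.

Lemma good_det m (M : tens -> 'M[R]_m) :
  (forall i j, good (fun T => M T i j)) -> good (fun T => \det (M T)).
Proof.
move=> HM; apply: good_big => s _.
apply: good_mul; first exact: good_const.
by apply: good_bigprod => i _; apply: HM.
Qed.

End Good.
Section Dense.
Local Open Scope ring_scope.
Variable R : realType.
Variables n1 n2 n3 : nat.
Notation tens := (tensor R n1 n2 n3).

Lemma le_sum_term (I : finType) (F : I -> R) (i : I) :
  (forall j, 0 <= F j) -> F i <= \sum_j F j.
Proof.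
move=> H; rewrite (bigD1 i) //= lerDl; exact: sumr_ge0.
Qed.

Lemma dense_poly (f : tens -> R) (D0 : tens) : polyf f -> f D0 != 0 ->
  forall (T : tens) (eps : R), 0 < eps -> exists T' : tens,
    (forall i j k, `|T' i j k - T i j k| < eps) /\ f T' != 0.
Proof.
move=> pf hD T eps heps.
pose Dir : tens := fun i j k => D0 i j k - T i j k.
have [P HP] := pf T Dir.
have P1 : P.[1] != 0.
  rewrite -HP.
  have -> : linet T Dir 1 = D0.
    apply: functional_extensionality => i; apply: functional_extensionality => j.
    apply: functional_extensionality => k; rewrite /linet /Dir; ring.
  done.
have Pn0 : P != 0 by apply: contraNneq P1 => ->; rewrite horner0.
pose S := \sum_i \sum_j \sum_k `|Dir i j k|.
pose B := 1 + S.
have S0 : 0 <= S by apply: sumr_ge0 => i' _; apply: sumr_ge0 => j' _; apply: sumr_ge0.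
have hB0 : 0 < B by rewrite /B; lra.
have hB : forall i j k, `|Dir i j k| < B.
  move=> i j k.
  have h1 : `|Dir i j k| <= \sum_k `|Dir i j k| by apply: (@le_sum_term _ (fun k => `|Dir i j k|) k).
  have h2 : \sum_k `|Dir i j k| <= \sum_j \sum_k `|Dir i j k|.
    apply: (@le_sum_term _ (fun j => \sum_k `|Dir i j k|) j) => j'; exact: sumr_ge0.
  have h3 : \sum_j \sum_k `|Dir i j k| <= S.
    apply: (@le_sum_term _ (fun i => \sum_j \sum_k `|Dir i j k|) i) => i'.
    by apply: sumr_ge0 => j' _; apply: sumr_ge0.
  rewrite /B; lra.
pose delta := eps / B.
have hd : 0 < delta by rewrite divr_gt0.
pose rs := [seq delta / (k.+1)%:R | k <- iota 0 (size P)].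
have inj : injective (fun k : nat => delta / (k.+1)%:R).
  move=> a b /= /(mulfI (lt0r_neq0 hd)) /invr_inj /eqP; rewrite eqr_nat eqSS => /eqP //.
have : ~~ all (root P) rs.
  apply/negP => Hall.
  have := max_poly_roots Pn0 Hall; rewrite map_inj_uniq // iota_uniq size_map size_iota ltnn.
  by move=> /(_ isT).
case/allPn => x /mapP [k _ ->] hx.
exists (linet T Dir (delta / (k.+1)%:R)); split; last by rewrite HP.
move=> i j l; rewrite /linet.
have -> : T i j l + delta / (k.+1)%:R * Dir i j l - T i j l = delta / (k.+1)%:R * Dir i j l by ring.
have hx0 : 0 < delta / (k.+1)%:R by rewrite divr_gt0 // ltr0n.
have hxd : delta / (k.+1)%:R <= delta.
  rewrite ler_pdivrMr ?ltr0n // ler_peMr ?(ltW hd) // ler1n //.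
rewrite normrM (gtr0_norm hx0).
apply: (le_lt_trans (y := delta * `|Dir i j l|)).
  by rewrite ler_wpM2r.
have hBn : B != 0 by rewrite gt_eqF.
have -> : eps = delta * B by rewrite /delta; field.
by rewrite ltr_pM2l.
Qed.

Lemma open_nz (f : tens -> R) : contf f -> euclid_open (fun T => f T != 0).
Proof.
move=> cf T hT; have hpos : 0 < `|f T| by rewrite normr_gt0.
have [d hd H] := cf T _ hpos.
exists d => // T' H'; have := H T' H'.
apply: contraTneq => ->; rewrite sub0r normrN ltxx //.
Qed.
End Dense.
Section Typical.
Variable R : realType.
Variables n1 n2 n3 : nat.
Notation tens := (tensor R n1 n2 n3).

Lemma subrank_uniq (T : tens) r s : is_subrank T r -> is_subrank T s -> r = s.
Proof.
move=> [hr Hr] [hs Hs]; apply/eqP; rewrite eqn_leq.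
by rewrite (Hs _ hr) (Hr _ hs).
Qed.

Lemma typical_of_good (P : tens -> R) (D : tens) : good P -> (P D != 0)%R ->
  (forall T, (P T != 0)%R -> is_subrank T 2) ->
  forall r, typical_subrank R n1 n2 n3 r <-> r = 2%N.
Proof.
move=> [pP cP] PD HP r; split.
  move=> [U [Uo [[T0 UT0] HU]]].
  have [eps he H] := Uo T0 UT0.
  have [T' [hT' PT']] := dense_poly pP PD T0 he.
  exact: subrank_uniq (HU T' (H T' hT')) (HP T' PT').
move=> ->; exists (fun T => P T != 0%R); split; first exact: open_nz.
by split; [exists D | ].
Qed.
End Typical.
Section Restr.
Variable R : realType.
Local Open Scope ring_scope.

Lemma restrict_down n1 n2 n3 (T : tensor R n1 n2 n3) s :
  (3 <= s)%N -> restricts_to_unit T s -> restricts_to_unit T 3.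
Proof.
move=> hs [A1 [A2 [A3 H]]].
exists (\matrix_(a, i) A1 (widen_ord hs a) i).
exists (\matrix_(a, i) A2 (widen_ord hs a) i).
exists (\matrix_(a, i) A3 (widen_ord hs a) i).
apply: functional_extensionality => a; apply: functional_extensionality => b.
apply: functional_extensionality => c.
have := congr1 (fun F => F (widen_ord hs a) (widen_ord hs b) (widen_ord hs c)) H.
rewrite /tensor_map /unit_tensor /= => <-.
apply: eq_bigr => i _; apply: eq_bigr => j _; apply: eq_bigr => k _.
by rewrite !mxE.
Qed.

Lemma subrank2 n1 n2 n3 (T : tensor R n1 n2 n3) :
  restricts_to_unit T 2 -> ~ restricts_to_unit T 3 -> is_subrank T 2.
Proof.
move=> h2 h3; split => // s hs; rewrite leqNgt; apply/negP => hs3.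
by apply: h3; apply: restrict_down hs.
Qed.
End Restr.
Section P1.
Variable R : realType.
Local Open Scope ring_scope.

Definition i0 : 'I_3 := @Ordinal 3 0 isT.
Definition i1 : 'I_3 := @Ordinal 3 1 isT.
Definition i2 : 'I_3 := @Ordinal 3 2 isT.

Lemma sum3 (F : 'I_3 -> R) : \sum_(i < 3) F i = F i0 + F i1 + F i2.
Proof.
rewrite !big_ord_recl big_ord0 addr0 addrA.
by congr (_ + _ + _); congr F; apply: val_inj.
Qed.

Definition cross (u v : 'I_3 -> R) : 'I_3 -> R := fun i =>
  match val i with
  | 0 => u i1 * v i2 - u i2 * v i1
  | 1 => u i2 * v i0 - u i0 * v i2
  | _ => u i0 * v i1 - u i1 * v i0
  end.

Definition bil (x : 'I_3 -> R) (M : 'I_3 -> 'I_3 -> R) (z : 'I_3 -> R) :=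
  \sum_i \sum_j x i * M i j * z j.

Lemma bilE x M z : bil x M z =
  x i0 * M i0 i0 * z i0 + x i0 * M i0 i1 * z i1 + x i0 * M i0 i2 * z i2 +
  (x i1 * M i1 i0 * z i0 + x i1 * M i1 i1 * z i1 + x i1 * M i1 i2 * z i2) +
  (x i2 * M i2 i0 * z i0 + x i2 * M i2 i1 * z i1 + x i2 * M i2 i2 * z i2).
Proof. by rewrite /bil !sum3. Qed.

Variable n : nat.
Definition k0 : 'I_n.+2 := ord0.
Definition k1 : 'I_n.+2 := @Ordinal n.+2 1 isT.

Section T.
Variable T : tensor R 3 3 n.+2.
Definition sl (k : 'I_n.+2) : 'I_3 -> 'I_3 -> R := fun i j => T i j k.
Definition pm := T i0 i0 k0.
Definition pc := T i0 i0 k1.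
Definition Mp : 'I_3 -> 'I_3 -> R := fun i j => pm * T i j k1 - pc * T i j k0.
Definition e0 : 'I_3 -> R := fun i => match val i with 0 => 1 | _ => 0 end.
Definition b2 := cross (fun j => Mp i0 j) (fun j => T i0 j k0).
Definition a2 := cross (fun i => Mp i i0) (fun i => T i i0 k0).
Definition pt := bil a2 Mp b2.
Definition ps := bil a2 (sl k0) b2.
End T.
Definition p1 T := pm T * pt T.

End P1.
Section P1R.
Variable R : realType.
Local Open Scope ring_scope.
Variable n : nat.

Lemma tm_two (T : tensor R 3 3 n.+2) (A1 A2 : 'M[R]_(2,3)) (A3 : 'M[R]_(2,n.+2)) a b c :
  (forall k, k != k0 n -> k != k1 n -> A3 c k = 0) ->
  tensor_map A1 A2 A3 T a b c =
    A3 c (k0 n) * bil (fun i => A1 a i) (sl T (k0 n)) (fun j => A2 b j) +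
    A3 c (k1 n) * bil (fun i => A1 a i) (sl T (k1 n)) (fun j => A2 b j).
Proof.
move=> H; rewrite /tensor_map /bil !mulr_sumr -big_split; apply: eq_bigr => i _.
rewrite !mulr_sumr -big_split; apply: eq_bigr => j _.
rewrite big_ord_recl big_ord_recl big1 ?addr0.
  have -> : lift ord0 (@ord0 n) = k1 n by apply: val_inj.
  rewrite /sl /k0 /=; ring.
move=> k _; rewrite H ?mulr0 ?mul0r //.
Qed.
End P1R.
Section P1R2.
Variable R : realType.
Local Open Scope ring_scope.
Variable n : nat.
Variable T : tensor R 3 3 n.+2.

Lemma tm_two2 (A1 A2 : 'M[R]_(2,3)) (A3 : 'M[R]_(2,n.+2)) a b c x z :
  (forall k, k != k0 n -> k != k1 n -> A3 c k = 0) ->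
  (forall i, A1 a i = x i) -> (forall j, A2 b j = z j) ->
  tensor_map A1 A2 A3 T a b c =
    A3 c (k0 n) * bil x (sl T (k0 n)) z + A3 c (k1 n) * bil x (sl T (k1 n)) z.
Proof.
move=> H hx hz; rewrite tm_two //.
have -> : bil (fun i => A1 a i) (sl T (k0 n)) (fun j => A2 b j) = bil x (sl T (k0 n)) z.
  by rewrite !bilE !hx !hz.
have -> : bil (fun i => A1 a i) (sl T (k1 n)) (fun j => A2 b j) = bil x (sl T (k1 n)) z.
  by rewrite !bilE !hx !hz.
done.
Qed.

Lemma bil_Mp x z : bil x (Mp T) z = pm T * bil x (sl T (k1 n)) z - pc T * bil x (sl T (k0 n)) z.
Proof. rewrite !bilE /Mp /sl; ring. Qed.

Lemma f1 : bil (@e0 R) (sl T (k0 n)) (@e0 R) = pm T.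
Proof. rewrite bilE /e0 /sl /pm /=; ring. Qed.
Lemma f2 : bil (@e0 R) (Mp T) (@e0 R) = 0.
Proof. rewrite bilE /e0 /Mp /pm /pc /=; ring. Qed.
Lemma f3 : bil (@e0 R) (Mp T) (b2 T) = 0.
Proof. rewrite bilE /e0 /b2 /cross /=; rewrite /Mp; ring. Qed.
Lemma f4 : bil (@e0 R) (sl T (k0 n)) (b2 T) = 0.
Proof. rewrite bilE /e0 /b2 /cross /=; rewrite /Mp /sl; ring. Qed.
Lemma f5 : bil (a2 T) (Mp T) (@e0 R) = 0.
Proof. rewrite bilE /e0 /a2 /cross /=; rewrite /Mp; ring. Qed.
Lemma f6 : bil (a2 T) (sl T (k0 n)) (@e0 R) = 0.
Proof. rewrite bilE /e0 /a2 /cross /=; rewrite /Mp /sl; ring. Qed.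

End P1R2.
Section P1R3.
Variable R : realType.
Local Open Scope ring_scope.
Variable n : nat.
Variable T : tensor R 3 3 n.+2.

Lemma p1_restr : p1 T != 0 -> restricts_to_unit T 2.
Proof.
rewrite /p1 mulf_eq0 negb_or => /andP [hm ht].
pose m := pm T; pose t := pt T; pose s := ps T; pose c := pc T.
pose A1 : 'M[R]_(2,3) := \matrix_(a, i) match val a with 0 => @e0 R i | _ => a2 T i end.
pose A2 : 'M[R]_(2,3) := \matrix_(b, j) match val b with 0 => @e0 R j | _ => b2 T j end.
pose A3 : 'M[R]_(2,n.+2) := \matrix_(cc, k)
  match val cc with
  | 0 => if k == k0 n then 1 / m + s * c / (m * t) else if k == k1 n then - (s / t) else 0
  | _ => if k == k0 n then - (c / t) else if k == k1 n then m / t else 0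
  end.
exists A1, A2, A3.
have HA3 : forall cc k, k != k0 n -> k != k1 n -> A3 cc k = 0.
  by move=> cc k h0 h1; rewrite mxE (negbTE h0) (negbTE h1); case: (val cc).
have K1 : forall x z, bil x (sl T (k1 n)) z = (bil x (Mp T) z + c * bil x (sl T (k0 n)) z) / m.
  by move=> x z; rewrite bil_Mp; rewrite -/m -/c; field.
have k01 : (k1 n == k0 n) = false by [].
apply: functional_extensionality => a; apply: functional_extensionality => b.
apply: functional_extensionality => cc.
have hx : forall i, A1 a i = match val a with 0 => @e0 R i | _ => a2 T i end by move=> i; rewrite mxE.
have hz : forall j, A2 b j = match val b with 0 => @e0 R j | _ => b2 T j end by move=> j; rewrite mxE.
rewrite (tm_two2 T (HA3 cc) hx hz) K1 !mxE eqxx k01 /=.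
rewrite /unit_tensor.
case: a hx => [[|[|//]] ha] hx; case: b hz => [[|[|//]] hb] hz; case: cc => [[|[|//]] hc] /=;
  rewrite ?f1 ?f2 ?f3 ?f4 ?f5 ?f6 -/m -/t -/s -/c ?/pt ?/ps;
  try (rewrite -/(pt T) -/(ps T) -/t -/s); field; by rewrite ?hm ?ht.
Qed.
End P1R3.
Section P2.
Variable R : realType.
Local Open Scope ring_scope.

Definition q0 : 'I_4 := @Ordinal 4 0 isT.
Definition q1 : 'I_4 := @Ordinal 4 1 isT.
Definition q2 : 'I_4 := @Ordinal 4 2 isT.
Definition q3 : 'I_4 := @Ordinal 4 3 isT.

Lemma sum4 (F : 'I_4 -> R) : \sum_(k < 4) F k = F q0 + F q1 + F q2 + F q3.
Proof.
rewrite !big_ord_recl big_ord0 addr0 !addrA.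
by congr (_ + _ + _ + _); congr F; apply: val_inj.
Qed.

Definition c9 (x : nat) (h : (x < 9)%N) : 'I_9 := Ordinal h.
Lemma sum9 (F : 'I_9 -> R) : \sum_(c < 9) F c =
  F (@c9 0 isT) + F (@c9 1 isT) + F (@c9 2 isT) + F (@c9 3 isT) + F (@c9 4 isT) +
  F (@c9 5 isT) + F (@c9 6 isT) + F (@c9 7 isT) + F (@c9 8 isT).
Proof.
rewrite !big_ord_recl big_ord0 addr0 !addrA.
by congr (_ + _ + _ + _ + _ + _ + _ + _ + _); congr F; apply: val_inj.
Qed.

Definition ra (i : 'I_3) : 'I_3 := lift i (@Ordinal 2 0 isT).
Definition rc (i : 'I_3) : 'I_3 := lift i (@Ordinal 2 1 isT).

Definition minor (M : 'I_3 -> 'I_3 -> R) (i j : 'I_3) :=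
  M (ra i) (ra j) * M (rc i) (rc j) - M (ra i) (rc j) * M (rc i) (ra j).

Definition qf (T : tensor R 3 3 4) (k l : 'I_4) (i j : 'I_3) :=
  T (ra i) (ra j) k * T (rc i) (rc j) l - T (ra i) (rc j) k * T (rc i) (ra j) l.

Definition qq (T : tensor R 3 3 4) (k l : 'I_4) (i j : 'I_3) :=
  if k == l then qf T k k i j else qf T k l i j + qf T l k i j.

Definition mk (c : 'I_9) : 'I_4 :=
  match val c with 0 | 1 | 2 | 3 => q0 | 4 | 5 | 6 => q1 | _ => q2 end.
Definition ml (c : 'I_9) : 'I_4 :=
  match val c with 0 => q0 | 1 => q1 | 2 => q2 | 3 => q3 | 4 => q1 | 5 => q2
  | 6 => q3 | 7 => q2 | _ => q3 end.
Definition rI (r : 'I_9) : 'I_3 :=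
  match val r with 0 | 1 | 2 => i0 | 3 | 4 | 5 => i1 | _ => i2 end.
Definition rJ (r : 'I_9) : 'I_3 :=
  match val r with 0 | 3 | 6 => i0 | 1 | 4 | 7 => i1 | _ => i2 end.

Definition QM (T : tensor R 3 3 4) : 'M[R]_9 :=
  \matrix_(c, r) qq T (mk c) (ml c) (rI r) (rJ r).
Definition p2 T := \det (QM T).

Definition Tv (T : tensor R 3 3 4) (y : 'I_4 -> R) : 'I_3 -> 'I_3 -> R :=
  fun i j => \sum_k y k * T i j k.

Lemma QM_ident (T : tensor R 3 3 4) (y : 'I_4 -> R) (i j : 'I_3) :
  \sum_(c < 9) y (mk c) * y (ml c) * qq T (mk c) (ml c) i j + y q3 * y q3 * qf T q3 q3 i j
  = minor (Tv T y) i j.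
Proof.
rewrite sum9 /minor /Tv !sum4 /qq /=.
rewrite /qf; ring.
Qed.

End P2.
Section P2V.
Variable R : realType.
Local Open Scope ring_scope.

Lemma unit_of_kernel (A : 'M[R]_3) (G : 'I_3 -> 'I_3 -> R) :
  (forall a b, \sum_i A a i * G b i = (a == b)%:R) -> A \in unitmx.
Proof.
move=> H; rewrite unitmxE unitfE; apply/negP => /det0P [v vn0 hv].
apply/negP: vn0; rewrite negbK; apply/eqP/rowP => b; rewrite mxE.
have -> : v 0 b = \sum_a v 0 a * (a == b)%:R.
  rewrite (bigD1 b) //= eqxx mulr1 big1 ?addr0 // => a hab.
  by rewrite (negbTE hab) mulr0.
under eq_bigr do rewrite -H mulr_sumr.
rewrite exchange_big /=.
apply: big1 => i _.
have : (v *m A) 0 i = 0 by rewrite hv mxE.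
rewrite mxE => hi.
transitivity ((\sum_a v 0 a * A a i) * G b i); last by rewrite hi mul0r.
by rewrite mulr_suml; apply: eq_bigr => a _; rewrite mulrA.
Qed.

Variable n3 : nat.
Variable T : tensor R 3 3 n3.
Variables (A1 A2 : 'M[R]_3) (A3 : 'M[R]_(3, n3)).

Lemma tm_A1 a b c : tensor_map A1 A2 A3 T a b c =
  \sum_i A1 a i * (\sum_j \sum_k A2 b j * A3 c k * T i j k).
Proof.
rewrite /tensor_map; apply: eq_bigr => i _; rewrite mulr_sumr; apply: eq_bigr => j _.
rewrite mulr_sumr; apply: eq_bigr => k _; ring.
Qed.

Lemma tm_A2 a b c : tensor_map A1 A2 A3 T a b c =
  \sum_j A2 b j * (\sum_i \sum_k A1 a i * A3 c k * T i j k).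
Proof.
rewrite /tensor_map exchange_big /=; apply: eq_bigr => j _; rewrite mulr_sumr; apply: eq_bigr => i _.
rewrite mulr_sumr; apply: eq_bigr => k _; ring.
Qed.

Lemma tm_lin (lam mu : R) a b c c' : (forall k, lam * A3 c k = mu * A3 c' k) ->
  lam * tensor_map A1 A2 A3 T a b c = mu * tensor_map A1 A2 A3 T a b c'.
Proof.
move=> H; rewrite /tensor_map !mulr_sumr; apply: eq_bigr => i _.
rewrite !mulr_sumr; apply: eq_bigr => j _; rewrite !mulr_sumr; apply: eq_bigr => k _.
have := H k => e.
transitivity (A1 a i * A2 b j * (lam * A3 c k) * T i j k); first ring.
rewrite e; ring.
Qed.

Hypothesis HT : tensor_map A1 A2 A3 T = @unit_tensor R 3.
Lemma HTe a b c : tensor_map A1 A2 A3 T a b c = if (a == b) && (b == c) then 1 else 0.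
Proof. by rewrite HT. Qed.

Lemma A1_unit : A1 \in unitmx.
Proof.
apply: (@unit_of_kernel _ (fun b i => \sum_j \sum_k A2 b j * A3 b k * T i j k)) => a b.
by rewrite -tm_A1 HTe eqxx andbT; case: (a == b).
Qed.

Lemma A2_unit : A2 \in unitmx.
Proof.
apply: (@unit_of_kernel _ (fun a j => \sum_i \sum_k A1 a i * A3 a k * T i j k)) => b a.
by rewrite -tm_A2 HTe (eq_sym b a) andbb; case: (a == b).
Qed.

End P2V.
Section P2V4.
Variable R : realType.
Local Open Scope ring_scope.
Variable T : tensor R 3 3 4.
Variables (A1 A2 : 'M[R]_3) (A3 : 'M[R]_(3, 4)).
Hypothesis HT : tensor_map A1 A2 A3 T = @unit_tensor R 3.

Definition Mm c : 'M[R]_3 := \matrix_(i, j) Tv T (fun k => A3 c k) i j.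

Lemma Mm_conj c : A1 *m Mm c *m A2^T = delta_mx c c.
Proof.
apply/matrixP => a b; rewrite !mxE.
transitivity (tensor_map A1 A2 A3 T a b c).
  rewrite /tensor_map exchange_big /=; apply: eq_bigr => j _.
  rewrite !mxE mulr_suml; apply: eq_bigr => i _.
  rewrite !mxE /Tv mulr_sumr mulr_suml; apply: eq_bigr => k _; ring.
rewrite (HTe HT).
by case: (eqVneq b c) => [->|hbc]; rewrite ?eqxx ?andbT ?andbF ?(negbTE hbc) //; case: (a == c).
Qed.

Lemma Mm_entry c i j : Mm c i j = invmx A1 i c * invmx (A2^T) c j.
Proof.
have u1 := A1_unit HT; have u2 : A2^T \in unitmx by rewrite unitmx_tr (A2_unit HT).
have E : Mm c = invmx A1 *m (A1 *m Mm c *m A2^T) *m invmx (A2^T).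
  by rewrite !mulmxA mulVmx // mul1mx -mulmxA mulmxV // mulmx1.
rewrite E Mm_conj.
have -> : delta_mx c c = delta_mx c (0 : 'I_1) *m delta_mx 0 c :> 'M[R]_3 by rewrite mul_delta_mx.
rewrite mulmxA -colE -mulmxA -rowE !mxE big_ord1 !mxE //.
Qed.

Lemma minor_Mc c i j : minor (Tv T (fun k => A3 c k)) i j = 0.
Proof.
have e : forall a b, Tv T (fun k => A3 c k) a b = invmx A1 a c * invmx (A2^T) c b.
  by move=> a b; rewrite -Mm_entry mxE.
rewrite /minor !e; ring.
Qed.

End P2V4.
Section P2V5.
Variable R : realType.
Local Open Scope ring_scope.
Variable T : tensor R 3 3 4.
Variables (A1 A2 : 'M[R]_3) (A3 : 'M[R]_(3, 4)).
Hypothesis HT : tensor_map A1 A2 A3 T = @unit_tensor R 3.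

Let y1 := fun k => A3 i0 k.
Let y2 := fun k => A3 i1 k.

Lemma kill (al be : R) :
  al * (y1 q3 * y1 q3) + be * (y2 q3 * y2 q3) = 0 ->
  (\row_c (al * (y1 (mk c) * y1 (ml c)) + be * (y2 (mk c) * y2 (ml c)))) *m QM T = 0.
Proof.
move=> h; apply/rowP => r; rewrite !mxE.
have I1 := QM_ident T y1 (rI r) (rJ r); rewrite (minor_Mc HT) in I1.
have I2 := QM_ident T y2 (rI r) (rJ r); rewrite (minor_Mc HT) in I2.
set S1 := \sum_c _ in I1; set S2 := \sum_c _ in I2.
transitivity (al * S1 + be * S2).
  rewrite /S1 /S2 !mulr_sumr -big_split; apply: eq_bigr => c _; rewrite !mxE /=; ring.
have E1 : S1 = - (y1 q3 * y1 q3 * qf T q3 q3 (rI r) (rJ r)) by apply/eqP; rewrite -addr_eq0 I1.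
have E2 : S2 = - (y2 q3 * y2 q3 * qf T q3 q3 (rI r) (rJ r)) by apply/eqP; rewrite -addr_eq0 I2.
rewrite E1 E2.
transitivity (- qf T q3 q3 (rI r) (rJ r) * (al * (y1 q3 * y1 q3) + be * (y2 q3 * y2 q3))); first ring.
by rewrite h mulr0.
Qed.

Lemma tmv a b c : tensor_map A1 A2 A3 T a b c = if (a == b) && (b == c) then 1 else 0.
Proof. by rewrite (HTe HT). Qed.

Lemma y_nz (c : 'I_3) : (forall k, A3 c k = 0) -> False.
Proof.
move=> h.
have hl : forall k, 1 * A3 c k = 0 * A3 c k by move=> k; rewrite h mulr0 mul0r.
have := @tm_lin _ _ T A1 A2 A3 1 0 c c c c hl.
by rewrite tmv !eqxx /= mul1r mul0r => /eqP; rewrite oner_eq0.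
Qed.

Lemma k4 (P : 'I_4 -> Prop) : P q0 -> P q1 -> P q2 -> P q3 -> forall k, P k.
Proof.
move=> h0 h1 h2 h3 [[|[|[|[|//]]]] hk].
- by have -> : Ordinal hk = q0 by apply: val_inj.
- by have -> : Ordinal hk = q1 by apply: val_inj.
- by have -> : Ordinal hk = q2 by apply: val_inj.
- by have -> : Ordinal hk = q3 by apply: val_inj.
Qed.

Lemma sq0 (x : R) : x * x = 0 -> x = 0.
Proof. by move/eqP; rewrite mulf_eq0 orbb => /eqP. Qed.

Lemma p2_vanish : p2 T = 0.
Proof.
apply/eqP/det0P.
have [h1|h1] := eqVneq (y1 q3) 0.
  exists (\row_c (1 * (y1 (mk c) * y1 (ml c)) + 0 * (y2 (mk c) * y2 (ml c)))); last first.
    by apply: kill; rewrite h1; ring.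
  apply/negP => /eqP /rowP hv.
  have e0 := hv (@c9 0 isT); have e4 := hv (@c9 4 isT); have e7 := hv (@c9 7 isT).
  rewrite !mxE /= in e0 e4 e7.
  apply: (@y_nz i0); apply: k4.
  - by apply: sq0; rewrite -e0 /y1; ring.
  - by apply: sq0; rewrite -e4 /y1; ring.
  - by apply: sq0; rewrite -e7 /y1; ring.
  - exact: h1.
have [h2|h2] := eqVneq (y2 q3) 0.
  exists (\row_c (0 * (y1 (mk c) * y1 (ml c)) + 1 * (y2 (mk c) * y2 (ml c)))); last first.
    by apply: kill; rewrite h2; ring.
  apply/negP => /eqP /rowP hv.
  have e0 := hv (@c9 0 isT); have e4 := hv (@c9 4 isT); have e7 := hv (@c9 7 isT).
  rewrite !mxE /= in e0 e4 e7.
  apply: (@y_nz i1); apply: k4.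
  - by apply: sq0; rewrite -e0 /y2; ring.
  - by apply: sq0; rewrite -e4 /y2; ring.
  - by apply: sq0; rewrite -e7 /y2; ring.
  - exact: h2.
exists (\row_c ((y2 q3 * y2 q3) * (y1 (mk c) * y1 (ml c)) + (- (y1 q3 * y1 q3)) * (y2 (mk c) * y2 (ml c)))); last first.
  by apply: kill; ring.
apply/negP => /eqP /rowP hv.
have e3 := hv (@c9 3 isT); have e6 := hv (@c9 6 isT); have e8 := hv (@c9 8 isT).
rewrite !mxE /= in e3 e6 e8.
have h12 : y1 q3 * y2 q3 != 0 by rewrite mulf_neq0.
have dep : forall k, y2 q3 * A3 i0 k = y1 q3 * A3 i1 k.
  apply: k4.
  - apply/eqP; rewrite -subr_eq0; apply/eqP.
    apply: (mulfI h12); rewrite mulr0 -e3 /y1 /y2; ring.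
  - apply/eqP; rewrite -subr_eq0; apply/eqP.
    apply: (mulfI h12); rewrite mulr0 -e6 /y1 /y2; ring.
  - apply/eqP; rewrite -subr_eq0; apply/eqP.
    apply: (mulfI h12); rewrite mulr0 -e8 /y1 /y2; ring.
  - rewrite /y1 /y2; ring.
have := @tm_lin _ _ T A1 A2 A3 (y2 q3) (y1 q3) i0 i0 i0 i1 dep.
rewrite !tmv !eqxx /= mulr1 mulr0.
by move=> /eqP; rewrite (negbTE h2).
Qed.

End P2V5.

Lemma p2_restr (R : realType) (T : tensor R 3 3 4) : (p2 T != 0)%R -> ~ restricts_to_unit T 3.
Proof. move=> h [A1 [A2 [A3 HT]]]; by rewrite (p2_vanish HT) eqxx in h. Qed.
Section Wit.
Variable R : realType.
Local Open Scope ring_scope.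

Definition Dw : tensor R 3 3 4 := fun i j k =>
  match val k, val i, val j with
  | 0, 0, 0 => 1 | 0, 2, 2 => 1
  | 1, 0, 2 => 1 | 1, 1, 0 => 1 | 1, 2, 1 => 1
  | 2, 1, 1 => 1 | 2, 2, 0 => -1
  | 3, 0, 1 => 1
  | _, _, _ => 0
  end.

Lemma p1_Dw : p1 Dw = -1.
Proof.
rewrite /p1 /pt bilE /a2 /b2 /cross /Mp /pm /pc /= /Dw /=. ring.
Qed.

Lemma k9 (P : 'I_9 -> Prop) : P (@c9 0 isT) -> P (@c9 1 isT) -> P (@c9 2 isT) ->
  P (@c9 3 isT) -> P (@c9 4 isT) -> P (@c9 5 isT) -> P (@c9 6 isT) -> P (@c9 7 isT) ->
  P (@c9 8 isT) -> forall c, P c.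
Proof.
move=> h0 h1 h2 h3 h4 h5 h6 h7 h8 [[|[|[|[|[|[|[|[|[|//]]]]]]]]] hk].
- by have -> : Ordinal hk = @c9 0 isT by apply: val_inj.
- by have -> : Ordinal hk = @c9 1 isT by apply: val_inj.
- by have -> : Ordinal hk = @c9 2 isT by apply: val_inj.
- by have -> : Ordinal hk = @c9 3 isT by apply: val_inj.
- by have -> : Ordinal hk = @c9 4 isT by apply: val_inj.
- by have -> : Ordinal hk = @c9 5 isT by apply: val_inj.
- by have -> : Ordinal hk = @c9 6 isT by apply: val_inj.
- by have -> : Ordinal hk = @c9 7 isT by apply: val_inj.
- by have -> : Ordinal hk = @c9 8 isT by apply: val_inj.
Qed.

Lemma p2_Dw : p2 Dw != 0.
Proof.
apply/negP => /det0P [v vn0 hv]; apply/negP: vn0; rewrite negbK.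
have E : forall r, \sum_c v 0 c * QM Dw c r = 0.
  by move=> r; have := congr1 (fun M : 'M[R]_(1,9) => M 0 r) hv; rewrite !mxE.
have e0 := E (@c9 0 isT); rewrite sum9 !mxE /= /qq /= /qf /Dw /= in e0.
have e1 := E (@c9 1 isT); rewrite sum9 !mxE /= /qq /= /qf /Dw /= in e1.
have e2 := E (@c9 2 isT); rewrite sum9 !mxE /= /qq /= /qf /Dw /= in e2.
have e3 := E (@c9 3 isT); rewrite sum9 !mxE /= /qq /= /qf /Dw /= in e3.
have e4 := E (@c9 4 isT); rewrite sum9 !mxE /= /qq /= /qf /Dw /= in e4.
have e5 := E (@c9 5 isT); rewrite sum9 !mxE /= /qq /= /qf /Dw /= in e5.
have e6 := E (@c9 6 isT); rewrite sum9 !mxE /= /qq /= /qf /Dw /= in e6.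
have e7 := E (@c9 7 isT); rewrite sum9 !mxE /= /qq /= /qf /Dw /= in e7.
have e8 := E (@c9 8 isT); rewrite sum9 !mxE /= /qq /= /qf /Dw /= in e8.
apply/eqP/rowP => c; rewrite mxE.
apply: (k9 (P := fun c => v 0 c = 0)); lra.
Qed.
End Wit.
Section Goodness.
Variable R : realType.
Local Open Scope ring_scope.
Variables n1 n2 n3 : nat.
Notation tens := (tensor R n1 n2 n3).

Lemma good_cross (u v : tens -> 'I_3 -> R) :
  (forall i, good (fun T => u T i)) -> (forall i, good (fun T => v T i)) ->
  forall i, good (fun T => cross (u T) (v T) i).
Proof.
move=> hu hv [[|[|[|//]]] hi]; rewrite /cross /=;
  apply: good_add; (try apply: good_opp); apply: good_mul; by [apply: hu | apply: hv].
Qed.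

Lemma good_bil (x z : tens -> 'I_3 -> R) (M : tens -> 'I_3 -> 'I_3 -> R) :
  (forall i, good (fun T => x T i)) -> (forall i j, good (fun T => M T i j)) ->
  (forall j, good (fun T => z T j)) -> good (fun T => bil (x T) (M T) (z T)).
Proof.
move=> hx hM hz; rewrite /bil; apply: good_big => i _; apply: good_big => j _.
by apply: good_mul; [apply: good_mul|].
Qed.

Lemma good_p2E (E : tens -> tensor R 3 3 4) :
  (forall i j k, good (fun T => E T i j k)) -> good (fun T => p2 (E T)).
Proof.
move=> hE; rewrite /p2; apply: good_det => c r.
apply: (good_ext (f := fun T => qq (E T) (mk c) (ml c) (rI r) (rJ r))); last by move=> T; rewrite mxE.
rewrite /qq; case: (mk c == ml c); rewrite /qf;
  repeat first [apply: good_add | apply: good_opp | apply: good_mul | apply: hE].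
Qed.
End Goodness.

Section Goodness2.
Variable R : realType.
Local Open Scope ring_scope.
Variable n : nat.

Lemma good_p1 : good (fun T : tensor R 3 3 n.+2 => p1 T).
Proof.
have hMp : forall i j, good (fun T : tensor R 3 3 n.+2 => Mp T i j).
  move=> i j; rewrite /Mp /pm /pc.
  by apply: good_add; [|apply: good_opp]; apply: good_mul; apply: good_coord.
rewrite /p1 /pt; apply: good_mul; first exact: good_coord.
apply: good_bil => //.
- rewrite /a2; apply: good_cross => // i; exact: good_coord.
- rewrite /b2; apply: good_cross => // i; exact: good_coord.
Qed.
End Goodness2.
Section Final.
Variable R : realType.
Local Open Scope ring_scope.

Definition X0 : 'I_3 -> 'I_3 -> R := fun i j => Dw R i j q3.
Definition ext (T : tensor R 3 3 3) : tensor R 3 3 4 :=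
  fun i j k => if (val k < 3)%N then T i j (inord k) else X0 i j.

Lemma good_ext_coord i j k : good (fun T : tensor R 3 3 3 => ext T i j k).
Proof. rewrite /ext; case: (val k < 3)%N; [exact: good_coord | exact: good_const]. Qed.

Lemma ext_restr (T : tensor R 3 3 3) : restricts_to_unit T 3 -> restricts_to_unit (ext T) 3.
Proof.
move=> [A1 [A2 [A3 H]]].
exists A1, A2, (\matrix_(c, k) if (val k < 3)%N then A3 c (inord k) else 0).
rewrite -H; apply: functional_extensionality => a; apply: functional_extensionality => b.
apply: functional_extensionality => c.
rewrite /tensor_map; apply: eq_bigr => i _; apply: eq_bigr => j _.
rewrite big_ord_recr /= mxE /= mulr0 mul0r addr0.
apply: eq_bigr => k _; rewrite mxE /ext /= ltn_ord.
by have -> : (inord k : 'I_3) = k by apply: val_inj; rewrite /= inordK.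
Qed.

Definition D3 : tensor R 3 3 3 := fun i j k => Dw R i j (widen_ord (leqnSn 3) k).

Lemma ext_D3 : ext D3 = Dw R.
Proof.
apply: functional_extensionality => i; apply: functional_extensionality => j.
apply: functional_extensionality => k; rewrite /ext /D3.
case: ifP => h.
  by have -> : widen_ord (leqnSn 3) (inord k : 'I_3) = k by apply: val_inj; rewrite /= inordK.
have -> : k = q3 by apply: val_inj => /=; move: (ltn_ord k); rewrite ltnS leq_eqVlt h orbF => /eqP.
by [].
Qed.

Lemma p1_D3 : p1 D3 = -1.
Proof. rewrite /p1 /pt bilE /a2 /b2 /cross /Mp /pm /pc /= /D3 /Dw /=. ring. Qed.

Definition P4 (T : tensor R 3 3 4) := p1 T * p2 T.
Definition P3 (T : tensor R 3 3 3) := p1 T * p2 (ext T).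

Lemma good_P4 : good P4.
Proof.
rewrite /P4; apply: good_mul; first exact: (good_p1 R 2).
have hc : forall i j k, good (fun T : tensor R 3 3 4 => T i j k) by move=> i j k; exact: good_coord.
by apply: good_ext (good_p2E hc) _ => T.
Qed.

Lemma good_P3 : good P3.
Proof.
rewrite /P3; apply: good_mul; first exact: (good_p1 R 1).
by apply: good_ext (good_p2E good_ext_coord) _ => T.
Qed.

Lemma P4_D : P4 (Dw R) != 0.
Proof. by rewrite /P4 p1_Dw mulf_neq0 ?oppr_eq0 ?oner_eq0 ?p2_Dw. Qed.

Lemma P3_D : P3 D3 != 0.
Proof. by rewrite /P3 p1_D3 ext_D3 mulf_neq0 ?oppr_eq0 ?oner_eq0 ?p2_Dw. Qed.

Lemma P4_sub T : P4 T != 0 -> is_subrank T 2.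
Proof.
rewrite /P4 mulf_eq0 negb_or => /andP [h1 h2].
by apply: subrank2; [apply: p1_restr | apply: p2_restr].
Qed.

Lemma P3_sub T : P3 T != 0 -> is_subrank T 2.
Proof.
rewrite /P3 mulf_eq0 negb_or => /andP [h1 h2].
apply: subrank2; first by apply: p1_restr.
by move=> /ext_restr; apply: p2_restr.
Qed.
End Final.

Theorem corollary4p6 (R : realType) :
  (forall r : nat, typical_subrank R 3 3 3 r <-> r = 2%N) /\
  (forall r : nat, typical_subrank R 3 3 4 r <-> r = 2%N).
Proof.
split.
  exact: (typical_of_good (@good_P3 R) (@P3_D R) (@P3_sub R)).
exact: (typical_of_good (@good_P4 R) (@P4_D R) (@P4_sub R)).
Qed.
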